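(* Let $n\geq 2$ and let $\Phi:\mathfrak{B}([n])\to \mathbf{Gpd}$ be a covariant strict 2-functor (equivalently, a functor from the poset $\mathfrak{B}([n])$ to the category of small groupoids). Suppose: (A1) for every integer $1\leq k\leq n-1$, the condition $A^{[k]}_\emptyset$ holds, i.e. the canonical functor $\operatorname{colim}_{\mathfrak{B}([k])}\Phi\to \Phi([k])$ is injective on objects; (A2) for every integer $1\leq k\leq n-2$ and every subset $U\subseteq\{k+2,\dots,n\}$, the condition $A^V_U$ holds, where $V=[k]\sqcup U$, i.e. the canonical functor $\operatorname{colim}_{\mathfrak{B}(V:U)}\Phi\to \Phi(V)$ is injective on objects. Then the comparison functor $\delta:\operatorname{2colim}_{\mathfrak{B}([n])}\Phi\to \operatorname{colim}_{\mathfrak{B}([n])}\Phi$ is an equivalence of categories.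
   Context: For $n\ge1$, $[n]=\{1,\dots,n\}$. For a finite set $V$, $\mathfrak{B}(V)$ is the poset (ordered by inclusion, regarded as a category) of all proper subsets of $V$; for a proper subset $U\subsetneq V$, $\mathfrak{B}(V:U)=\{X: U\subseteq X\subsetneq V\}$. For $k<n$, $\mathfrak{B}([k])$ is regarded as a subposet of $\mathfrak{B}([n])$, and for $U\subseteq V\subseteq[n]$ with $V\neq[n]$, $\mathfrak{B}(V:U)$ is regarded as a subposet of $\mathfrak{B}([n])$; colimits over these subposets are of the restriction of $\Phi$. For $S\subseteq T$ write $\Phi_{S,T}:\Phi(S)\to\Phi(T)$ for the induced functor. $\mathbf{Gpd}$ is the 2-category of small groupoids, functors and natural transformations. A functor is injective on objects if its map on object sets is injective. The colimit $\operatorname{colim}\Phi$ is the ordinary colimit in the category of small groupoids (it represents $\mathcal G\mapsto\lim_i\operatorname{Hom}(\Phi(i),\mathcal G)$); the canonical functor $\operatorname{colim}_{\mathfrak{B}(V:U)}\Phi\to\Phi(V)$ is induced by the functors $\Phi_{X,V}$. The 2-colimit $\operatorname{2colim}\Phi$ is a groupoid $\mathcal C$ with an equivalence $\operatorname{Hom}_{\mathbf{Gpd}}(\mathcal C,\mathcal G)\simeq \operatorname{2lim}_i\operatorname{Hom}_{\mathbf{Gpd}}(\Phi(i),\mathcal G)$ natural in groupoids $\mathcal G$, where for a functor $\Psi:I^{op}\to\mathbf{Gpd}$ on a poset $I$, $\operatorname{2lim}\Psi$ has objects $(x_i,\xi_{ij})$ with $x_i\in\Psi(i)$ and isomorphisms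 $\xi_{ij}:\Psi_{ij}(x_j)\to x_i$ ($i\le j$) satisfying $\xi_{ik}=\xi_{ij}\circ\Psi_{ij}(\xi_{jk})$ for $i\le j\le k$, and morphisms families $f_i:x_i\to y_i$ with $f_i\circ\xi_{ij}=\eta_{ij}\circ\Psi_{ij}(f_j)$. Concretely, $\operatorname{2colim}\Phi$ is the groupoid obtained from the Grothendieck construction $\int_I\Phi$ (objects $(i,x)$ with $x\in\Phi(i)$; morphisms $(i,x)\to(j,y)$ for $i\le j$ are morphisms $\Phi_{i,j}(x)\to y$ in $\Phi(j)$) by inverting all morphisms. The comparison functor $\delta$ is the functor corresponding (via these universal properties) to the fully faithful functor $\lim\operatorname{Hom}(\Phi,\mathcal G)\to\operatorname{2lim}\operatorname{Hom}(\Phi,\mathcal G)$, $(x_i)\mapsto(x_i,\mathrm{id})$; concretely it sends $(i,x)$ to the image of $x$ under $\Phi(i)\to\operatorname{colim}\Phi$. *)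

(* Defs.v *)
From HB Require Import structures.
From mathcomp Require Import all_boot.
From Stdlib Require Import Relations.Relation_Operators.
From Stdlib Require Import ProofIrrelevance FunctionalExtensionality PropExtensionality IndefiniteDescription.

Set Implicit Arguments. Unset Strict Implicit. Unset Printing Implicit Defensive.

(* Small groupoids.  Morphisms carry a setoid equality [geq] (the equality of *)
(* morphisms of the groupoid); composition is written in diagrammatic order:  *)
(* [gcomp f g] is "first f, then g".                                          *)
Record Gpd := Gpd_ {
  ob :> Type;
  hom : ob -> ob -> Type;
  geq : forall x y : ob, hom x y -> hom x y -> Prop;
  gid : forall x : ob, hom x x;
  gcomp : forall x y z : ob, hom x y -> hom y z -> hom x z;
  ginv : forall x y : ob, hom x y -> hom y x;
  geq_refl : forall x y (f : hom x y), geq f f;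
  geq_sym : forall x y (f g : hom x y), geq f g -> geq g f;
  geq_trans : forall x y (f g h : hom x y), geq f g -> geq g h -> geq f h;
  gcomp_geq : forall x y z (f f' : hom x y) (g g' : hom y z),
      geq f f' -> geq g g' -> geq (gcomp f g) (gcomp f' g');
  ginv_geq : forall x y (f f' : hom x y), geq f f' -> geq (ginv f) (ginv f');
  gcompA : forall x y z w (f : hom x y) (g : hom y z) (h : hom z w),
      geq (gcomp f (gcomp g h)) (gcomp (gcomp f g) h);
  gid_l : forall x y (f : hom x y), geq (gcomp (gid x) f) f;
  gid_r : forall x y (f : hom x y), geq (gcomp f (gid y)) f;
  ginv_r : forall x y (f : hom x y), geq (gcomp f (ginv f)) (gid x);
  ginv_l : forall x y (f : hom x y), geq (gcomp (ginv f) f) (gid y)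
}.


Record Functor (G H : Gpd) := Functor_ {
  fobj :> G -> H;
  fmor : forall x y : G, hom x y -> hom (fobj x) (fobj y);
  fmor_geq : forall x y (f g : hom x y), geq f g -> geq (fmor f) (fmor g);
  fmor_id : forall x : G, geq (fmor (gid x)) (gid (fobj x));
  fmor_comp : forall x y z (f : hom x y) (g : hom y z),
      geq (fmor (gcomp f g)) (gcomp (fmor f) (fmor g))
}.
Arguments fmor {G H} _ {x y}.

Definition Fid (G : Gpd) : Functor G G :=
  @Functor_ G G (fun x => x) (fun x y f => f) (fun x y f g h => h)
    (fun x => geq_refl (gid x)) (fun x y z f g => geq_refl (gcomp f g)).

Definition Fcomp (A B C : Gpd) (F : Functor A B) (F' : Functor B C) : Functor A C.
Proof.
refine (@Functor_ A C (fun x => F' (F x)) (fun x y f => fmor F' (fmor F f)) _ _ _).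
- by move=> x y f g h; apply: fmor_geq; apply: fmor_geq.
- move=> x; apply: geq_trans (fmor_id F' (F x)).
  by apply: fmor_geq; apply: fmor_id.
- move=> x y z f g; apply: geq_trans (fmor_comp F' _ _).
  by apply: fmor_geq; apply: fmor_comp.
Defined.

(* Natural isomorphism (every natural transformation between functors into a *)
(* groupoid is a natural isomorphism).                                        *)
Definition NatIso (A B : Gpd) (F F' : Functor A B) : Prop :=
  exists eta : forall x : A, hom (F x) (F' x),
    forall (x y : A) (f : hom x y),
      geq (gcomp (fmor F f) (eta y)) (gcomp (eta x) (fmor F' f)).

Definition IsEquivalence (A B : Gpd) (F : Functor A B) : Prop :=
  exists G : Functor B A,
    NatIso (Fcomp F G) (Fid A) /\ NatIso (Fcomp G F) (Fid B).

Definition htransport (G : Gpd) (x x' y y' : G) (ex : x = x') (ey : y = y')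
  (f : hom x y) : hom x' y' :=
  match ex in _ = a return hom a y' with
  | erefl => match ey in _ = b return hom x b with erefl => f end end.

(* A (strict) functor from a poset (I, le) to groupoids: functors Phi_{i,j}   *)
(* for i <= j with Phi_{i,i} = Id and Phi_{j,k} o Phi_{i,j} = Phi_{i,k}       *)
(* holding on the nose (objects equal, morphisms equal after transport).      *)
Record Diagram (I : Type) (le : I -> I -> bool) := Diagram_ {
  dob :> I -> Gpd;
  dmap : forall i j, le i j -> Functor (dob i) (dob j);
  dmap_id_ob : forall i (h : le i i) (x : dob i), dmap h x = x;
  dmap_id_mor : forall i (h : le i i) (x y : dob i) (f : hom x y),
      geq (htransport (dmap_id_ob h x) (dmap_id_ob h y) (fmor (dmap h) f)) f;
  dmap_comp_ob : forall i j k (hij : le i j) (hjk : le j k) (hik : le i k) (x : dob i),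
      dmap hjk (dmap hij x) = dmap hik x;
  dmap_comp_mor : forall i j k (hij : le i j) (hjk : le j k) (hik : le i k)
      (x y : dob i) (f : hom x y),
      geq (htransport (dmap_comp_ob hij hjk hik x) (dmap_comp_ob hij hjk hik y)
             (fmor (dmap hjk) (fmor (dmap hij) f)))
          (fmor (dmap hik) f)
}.
Arguments dmap {I le} _ {i j}.

Definition quot (X : Type) (R : X -> X -> Prop) :=
  {P : X -> Prop | exists x, P = clos_refl_sym_trans X R x}.
Definition qcls (X : Type) (R : X -> X -> Prop) (x : X) : quot R :=
  exist _ (clos_refl_sym_trans X R x) (ex_intro _ x erefl).
Arguments qcls {X} R x.

Lemma qcls_eq (X : Type) (R : X -> X -> Prop) (x y : X) :
  clos_refl_sym_trans X R x y -> qcls R x = qcls R y.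
Proof.
move=> Hxy.
have E : clos_refl_sym_trans X R x = clos_refl_sym_trans X R y.
  apply: functional_extensionality => z; apply: propositional_extensionality; split.
  - by move=> H; apply: rst_trans H; apply: rst_sym.
  - by move=> H; apply: rst_trans H.
rewrite /qcls; move: (ex_intro _ x _) (ex_intro _ y _); rewrite E => p1 p2.
by rewrite (proof_irrelevance _ p1 p2).
Qed.

Lemma qcls_inv (X : Type) (R : X -> X -> Prop) (x y : X) :
  qcls R x = qcls R y -> clos_refl_sym_trans X R x y.
Proof.
move=> /(f_equal (@proj1_sig _ _)) /= E.
by rewrite E; apply: rst_refl.
Qed.

(* Groupoids presented by generators (letters with formal source/target and  *)
(* a chosen inverse letter) and relations; morphisms are composable words.   *)
Section Presented.
Variables (O L : Type) (src tgt : L -> O) (linv : L -> L).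
Hypotheses (src_linv : forall l, src (linv l) = tgt l)
           (tgt_linv : forall l, tgt (linv l) = src l).
Variable B : seq L -> seq L -> Prop.

Definition winv (w : seq L) : seq L := rev (map linv w).

Inductive brel : seq L -> seq L -> Prop :=
| br_base l r : B l r -> brel l r
| br_inv l r : brel l r -> brel (winv l) (winv r).

Inductive wstep : seq L -> seq L -> Prop :=
| ws_rel u l r v : brel l r -> wstep (u ++ l ++ v) (u ++ r ++ v)
| ws_cancel_r u a v : wstep (u ++ [:: a; linv a] ++ v) (u ++ v)
| ws_cancel_l u a v : wstep (u ++ [:: linv a; a] ++ v) (u ++ v).

Definition weq := clos_refl_sym_trans _ wstep.

Fixpoint wf (a : O) (w : seq L) (b : O) : Prop :=
  match w with
  | [::] => a = b
  | l :: w' => a = src l /\ wf (tgt l) w' b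
  end.

Lemma winv_cat u v : winv (u ++ v) = winv v ++ winv u.
Proof. by rewrite /winv map_cat rev_cat. Qed.

Lemma winv_cons l w : winv (l :: w) = winv w ++ [:: linv l].
Proof. by rewrite /winv /= rev_cons cats1. Qed.

Lemma winv2 a b : winv [:: a; b] = [:: linv b; linv a].
Proof. by rewrite /winv /rev /=. Qed.

Lemma wf_cat a b c u v : wf a u b -> wf b v c -> wf a (u ++ v) c.
Proof.
elim: u a => [|l u IH] a /=; first by move=> ->.
by case=> -> H1 H2; split=> //; apply: IH H1 H2.
Qed.

Lemma wf_inv a b w : wf a w b -> wf b (winv w) a.
Proof.
elim: w a => [|l w IH] a /=; first by move=> ->.
case=> -> H; rewrite winv_cons; apply: wf_cat (IH _ H) _ => /=.
by rewrite src_linv tgt_linv.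
Qed.

Lemma wstep_catl s x y : wstep x y -> wstep (s ++ x) (s ++ y).
Proof.
case=> [u l r v H|u a v|u a v]; rewrite !(catA s u).
- exact: ws_rel.
- exact: ws_cancel_r.
- exact: ws_cancel_l.
Qed.

Lemma wstep_catr s x y : wstep x y -> wstep (x ++ s) (y ++ s).
Proof.
case=> [u l r v H|u a v|u a v]; rewrite -!catA.
- exact: ws_rel.
- exact: (ws_cancel_r u a (v ++ s)).
- exact: (ws_cancel_l u a (v ++ s)).
Qed.

Lemma weq_catl s x y : weq x y -> weq (s ++ x) (s ++ y).
Proof.
elim=> [a b H|a|a b _ IH|a b c _ IH1 _ IH2].
- by apply: rst_step; apply: wstep_catl.
- exact: rst_refl.
- exact: rst_sym.
- exact: rst_trans IH1 IH2.
Qed.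

Lemma weq_catr s x y : weq x y -> weq (x ++ s) (y ++ s).
Proof.
elim=> [a b H|a|a b _ IH|a b c _ IH1 _ IH2].
- by apply: rst_step; apply: wstep_catr.
- exact: rst_refl.
- exact: rst_sym.
- exact: rst_trans IH1 IH2.
Qed.

Lemma weq_cat x x' y y' : weq x x' -> weq y y' -> weq (x ++ y) (x' ++ y').
Proof.
move=> H1 H2; apply: rst_trans (weq_catr _ H1) _; exact: weq_catl.
Qed.

Lemma weq_inv x y : weq x y -> weq (winv x) (winv y).
Proof.
elim=> [a b H|a|a b _ IH|a b c _ IH1 _ IH2].
- apply: rst_step; case: H => [u l r v H|u a' v|u a' v];
    rewrite !winv_cat ?winv2 -!catA.
  + by apply: ws_rel; apply: br_inv.
  + exact: (ws_cancel_l (winv v) (linv a') (winv u)).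
  + exact: (ws_cancel_r (winv v) (linv a') (winv u)).
- exact: rst_refl.
- exact: rst_sym.
- exact: rst_trans IH1 IH2.
Qed.

Lemma weq_invr w : weq (w ++ winv w) [::].
Proof.
elim: w => [|l w IH]; first exact: rst_refl.
rewrite winv_cons.
apply: (rst_trans _ _ _ ([:: l] ++ [::] ++ [:: linv l])).
  have := weq_catl [:: l] (weq_catr [:: linv l] IH).
  by rewrite /= -catA.
exact: (rst_step _ _ _ _ (ws_cancel_r [::] l [::])).
Qed.

Lemma weq_invl w : weq (winv w ++ w) [::].
Proof.
elim: w => [|l w IH]; first exact: rst_refl.
rewrite winv_cons -catA.
apply: rst_trans IH.
exact: (rst_step _ _ _ _ (ws_cancel_l (winv w) l w)).
Qed.

Definition PGpd : Gpd.
Proof.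
refine (@Gpd_ O (fun a b => {w : seq L | wf a w b})
   (fun a b f g => weq (sval f) (sval g))
   (fun a => exist _ [::] (erefl a))
   (fun a b c f g => exist _ (sval f ++ sval g) (wf_cat (proj2_sig f) (proj2_sig g)))
   (fun a b f => exist _ (winv (sval f)) (wf_inv (proj2_sig f)))
   _ _ _ _ _ _ _ _ _ _).
- by move=> *; apply: rst_refl.
- by move=> *; apply: rst_sym.
- by move=> ? ? ? ? ?; apply: rst_trans.
- by move=> ? ? ? ? ? ? ? /=; apply: weq_cat.
- by move=> ? ? ? ? /=; apply: weq_inv.
- by move=> ? ? ? ? f g h /=; rewrite catA; apply: rst_refl.
- by move=> ? ? f /=; apply: rst_refl.
- by move=> ? ? f /=; rewrite cats0; apply: rst_refl.
- by move=> ? ? f /=; apply: weq_invr.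
- by move=> ? ? f /=; apply: weq_invl.
Defined.

End Presented.

Lemma ginvK (G : Gpd) (x y : G) (f : hom x y) : geq (ginv (ginv f)) f.
Proof.
set g := ginv f.
apply: geq_trans (geq_sym (gid_l (ginv g))) _.
apply: geq_trans (gcomp_geq (geq_sym (ginv_r f)) (geq_refl (ginv g))) _.
apply: geq_trans (geq_sym (gcompA f g (ginv g))) _.
apply: geq_trans (gcomp_geq (geq_refl f) (ginv_r g)) _.
exact: gid_r.
Qed.

Lemma weq_B (L : Type) (linv : L -> L) (B : seq L -> seq L -> Prop) l r :
  B l r -> weq linv B l r.
Proof.
move=> H; have := @ws_rel L linv B [::] l r [::] (br_base linv H).
by rewrite /= !cats0 => H'; apply: rst_step.
Qed.

Section PresMap.
Variables (O1 L1 O2 L2 : Type) (src1 tgt1 : L1 -> O1) (linv1 : L1 -> L1)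
  (B1 : seq L1 -> seq L1 -> Prop)
  (src2 tgt2 : L2 -> O2) (linv2 : L2 -> L2) (B2 : seq L2 -> seq L2 -> Prop)
  (fo : O1 -> O2) (fl : L1 -> L2).

Lemma wf_map :
  (forall l, fo (src1 l) = src2 (fl l)) -> (forall l, fo (tgt1 l) = tgt2 (fl l)) ->
  forall a w b, wf src1 tgt1 a w b -> wf src2 tgt2 (fo a) (map fl w) (fo b).
Proof.
move=> Hs Ht a w; elim: w a => [|l w IH] a b /=; first by move=> ->.
by case=> -> H; split; [apply: Hs | rewrite -Ht; apply: IH].
Qed.

Lemma weq_map :
  (forall l r, B1 l r -> weq linv2 B2 (map fl l) (map fl r)) ->
  (forall l, weq linv2 B2 [:: fl (linv1 l)] [:: linv2 (fl l)]) ->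
  (forall a, weq linv2 B2 (map fl [:: a; linv1 a]) [::]) ->
  (forall a, weq linv2 B2 (map fl [:: linv1 a; a]) [::]) ->
  forall u v, weq linv1 B1 u v -> weq linv2 B2 (map fl u) (map fl v).
Proof.
move=> HB Hinv Hcr Hcl.
have Hw : forall w, weq linv2 B2 (map fl (winv linv1 w)) (winv linv2 (map fl w)).
  elim=> [|l w IH]; first exact: rst_refl.
  rewrite /= !winv_cons map_cat; exact: weq_cat IH (Hinv l).
have Hbr : forall l r, brel linv1 B1 l r -> weq linv2 B2 (map fl l) (map fl r).
  move=> l r; elim=> [l' r' H|l' r' _ IH]; first exact: HB.
  apply: rst_trans (Hw _) _; apply: rst_trans (weq_inv IH) _.
  exact: rst_sym (Hw _).
move=> u v; elim=> [a b H|a|a b _ IH|a b c _ IH1 _ IH2].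
- case: H => [u' l r v' H|u' a' v'|u' a' v']; rewrite !map_cat.
  + by apply: weq_catl; apply: weq_catr; apply: Hbr.
  + by apply: weq_catl; apply: (weq_catr _ (Hcr a')).
  + by apply: weq_catl; apply: (weq_catr _ (Hcl a')).
- exact: rst_refl.
- exact: rst_sym.
- exact: rst_trans IH1 IH2.
Qed.
End PresMap.

(* The ordinary colimit (in the category of small groupoids) of a diagram D   *)
(* restricted to the subposet {i | P i}.  Objects: the colimit of the object  *)
(* sets (quotient of the disjoint union by (i,x) ~ (j, Phi_{ij} x)).          *)
(* Morphisms: composable words in the morphisms of the Phi(i), modulo the     *)
(* composition/identity relations of each Phi(i), the identifications         *)
(* f ~ Phi_{ij}(f), and the equality of morphisms of each Phi(i).             *)
Section Colim.
Variables (I : Type) (le : I -> I -> bool) (D : Diagram le) (P : pred I).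

Record cpt := CPt { cidx : I; cin : P cidx; cobj : D cidx }.

Definition cRel (a b : cpt) : Prop :=
  exists h : le (cidx a) (cidx b), cobj b = dmap D h (cobj a).

Definition cO := quot cRel.

Record cedge := CEdge { eidx : I; ein : P eidx; esrc : D eidx; etgt : D eidx;
                        emor : hom esrc etgt }.

Definition csrc (e : cedge) : cO := qcls cRel (@CPt (eidx e) (ein e) (esrc e)).
Definition ctgt (e : cedge) : cO := qcls cRel (@CPt (eidx e) (ein e) (etgt e)).
Definition clinv (e : cedge) : cedge := @CEdge (eidx e) (ein e) _ _ (ginv (emor e)).

Inductive cB : seq cedge -> seq cedge -> Prop :=
| cb_comp i (p : P i) (x y z : D i) (f : hom x y) (g : hom y z) :
    cB [:: @CEdge i p x y f; @CEdge i p y z g] [:: @CEdge i p x z (gcomp f g)]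
| cb_id i (p : P i) (x : D i) : cB [:: @CEdge i p x x (gid x)] [::]
| cb_map i j (p : P i) (q : P j) (h : le i j) (x y : D i) (f : hom x y) :
    cB [:: @CEdge i p x y f] [:: @CEdge j q _ _ (fmor (dmap D h) f)]
| cb_geq i (p : P i) (x y : D i) (f g : hom x y) :
    geq f g -> cB [:: @CEdge i p x y f] [:: @CEdge i p x y g].

Definition colim : Gpd :=
  @PGpd cO cedge csrc ctgt clinv (fun e => erefl) (fun e => erefl) cB.

(* The object part of the canonical functor colim_{P} Phi -> Phi(v), induced  *)
(* by the functors Phi_{i,v} (for an upper bound v of the subposet).          *)
Variables (v : I) (hPv : forall i, P i -> le i v).

Definition canon_pt (a : cpt) : D v := dmap D (hPv (cin a)) (cobj a).

Definition colim_to_obj (c : cO) : D v :=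
  canon_pt (proj1_sig (constructive_indefinite_description _ (proj2_sig c))).

Lemma canon_pt_clos a b : clos_refl_sym_trans _ cRel a b -> canon_pt a = canon_pt b.
Proof.
elim=> [x y [h Hb]|x|x y _ IH|x y z _ IH1 _ IH2] //.
- by rewrite /canon_pt Hb (@dmap_comp_ob _ _ D _ _ _ h (hPv (cin y)) (hPv (cin x))).
- by rewrite IH1.
Qed.

Lemma colim_to_obj_cls a : colim_to_obj (qcls cRel a) = canon_pt a.
Proof.
rewrite /colim_to_obj; case: constructive_indefinite_description => x /= Ex.
apply: canon_pt_clos; apply: rst_sym; rewrite Ex; exact: rst_refl.
Qed.

End Colim.

(* The 2-colimit: the Grothendieck construction with all morphisms inverted. *)
(* A generator (i,x) -> (j,y) (i <= j) is a morphism Phi_{ij}(x) -> y of      *)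
(* Phi(j); for convenience it is stored with an explicit copy x' of Phi_{ij} x*)
(* (field [gx'], with the equation [ge]).  Letters are generators (true) or   *)
(* formal inverses of generators (false).                                     *)
Section TwoColim.
Variables (I : Type) (le : I -> I -> bool) (D : Diagram le).

Record gmor := GMor { gi : I; gj : I; gh : le gi gj; gx : D gi; gx' : D gj; gy : D gj;
                      gf : hom gx' gy; ge : dmap D gh gx = gx' }.

Definition gO := {i : I & D i}.
Definition gL := (bool * gmor)%type.

Definition gsrc (l : gL) : gO :=
  if l.1 then existT _ (gi l.2) (gx l.2) else existT _ (gj l.2) (gy l.2).
Definition gtgt (l : gL) : gO :=
  if l.1 then existT _ (gj l.2) (gy l.2) else existT _ (gi l.2) (gx l.2).
Definition glinv (l : gL) : gL := (~~ l.1, l.2).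

Lemma gsrc_linv l : gsrc (glinv l) = gtgt l. Proof. by case: l => [[]]. Qed.
Lemma gtgt_linv l : gtgt (glinv l) = gsrc l. Proof. by case: l => [[]]. Qed.

Inductive gB : seq gL -> seq gL -> Prop :=
| gb_id i (h : le i i) (x : D i) (e : dmap D h x = x) :
    gB [:: (true, @GMor i i h x x x (gid x) e)] [::]
| gb_comp i j k (h1 : le i j) (h2 : le j k) (h3 : le i k) (x : D i) (x1 y : D j) (z : D k)
    (f : hom x1 y) (g : hom (dmap D h2 y) z) (e1 : dmap D h1 x = x1)
    (e3 : dmap D h3 x = dmap D h2 x1) :
    gB [:: (true, @GMor i j h1 x x1 y f e1); (true, @GMor j k h2 y _ z g erefl)]
       [:: (true, @GMor i k h3 x _ z (gcomp (fmor (dmap D h2) f) g) e3)]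
| gb_geq (m : gmor) (f' : hom (gx' m) (gy m)) :
    geq (gf m) f' -> gB [:: (true, m)] [:: (true, @GMor _ _ (gh m) _ _ _ f' (ge m))].

Definition twocolim : Gpd := @PGpd gO gL gsrc gtgt glinv gsrc_linv gtgt_linv gB.

Definition Ptrue : pred I := fun _ => true.

Definition delta_ob (a : gO) : cO D Ptrue :=
  qcls (@cRel _ _ D Ptrue) (@CPt _ _ D Ptrue (projT1 a) (erefl true) (projT2 a)).

Definition delta_l (l : gL) : cedge D Ptrue :=
  if l.1 then @CEdge _ _ D Ptrue (gj l.2) (erefl true) _ _ (gf l.2)
  else @CEdge _ _ D Ptrue (gj l.2) (erefl true) _ _ (ginv (gf l.2)).

Lemma delta_x' (m : gmor) :
  delta_ob (existT _ (gi m) (gx m)) = delta_ob (existT _ (gj m) (gx' m)).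
Proof. by apply: qcls_eq; apply: rst_step; exists (gh m); rewrite /= (ge m). Qed.

Lemma delta_src l : delta_ob (gsrc l) = csrc (delta_l l).
Proof. by case: l => [[] m] //=; rewrite delta_x'. Qed.

Lemma delta_tgt l : delta_ob (gtgt l) = ctgt (delta_l l).
Proof. by case: l => [[] m] //=; rewrite delta_x'. Qed.

Lemma delta_weq u w :
  weq glinv gB u w -> weq (@clinv _ _ D Ptrue) (@cB _ _ D Ptrue) (map delta_l u) (map delta_l w).
Proof.
apply: weq_map.
- move=> l r; case=> [i h x e|i j k h1 h2 h3 x x1 y z f g e1 e3|m f' H];
    rewrite /delta_l /=.
  + by apply: weq_B; apply: cb_id.
  + apply: rst_trans; last by apply: weq_B; apply: cb_comp.
    pose H0 := @weq_B _ (@clinv _ _ D Ptrue) _ _ _ (@cb_map _ _ D Ptrue j k (erefl true) (erefl true) h2 _ _ f). pose H1 := weq_catr [:: @CEdge _ _ D Ptrue k (erefl true) _ _ g] H0. exact H1.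
  + by apply: weq_B; apply: cb_geq.
- case=> [[] m] /=; first exact: rst_refl.
  by apply: weq_B; apply: cb_geq; apply: geq_sym; apply: ginvK.
- case=> [[] m] /=.
  + exact: (rst_step _ _ _ _ (ws_cancel_r _ _ [::] (delta_l (true, m)) [::])).
  + exact: (rst_step _ _ _ _ (ws_cancel_l _ _ [::] (delta_l (true, m)) [::])).
- case=> [[] m] /=.
  + exact: (rst_step _ _ _ _ (ws_cancel_l _ _ [::] (delta_l (true, m)) [::])).
  + exact: (rst_step _ _ _ _ (ws_cancel_r _ _ [::] (delta_l (true, m)) [::])).
Qed.

Definition delta : Functor twocolim (colim D Ptrue).
Proof.
refine (@Functor_ twocolim (colim D Ptrue) delta_ob
  (fun a b f => exist _ (map delta_l (sval f))
      (wf_map delta_src delta_tgt (proj2_sig f))) _ _ _).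
- by move=> a b f g /= H; apply: delta_weq.
- by move=> a /=; apply: rst_refl.
- by move=> a b c f g /=; rewrite map_cat; apply: rst_refl.
Defined.

End TwoColim.

(* The poset B([n]) of proper subsets of [n].  We index [n] = {1,..,n} by     *)
(* 'I_n = {0,..,n-1} (element m of [n] is the ordinal m-1).                   *)
Definition Bn (n : nat) := {S : {set 'I_n} | S != [set: 'I_n]}.
Definition Ble (n : nat) (S T : Bn n) : bool := sval S \subset sval T.

(* [k] = {1,..,k}, i.e. the ordinals i < k. *)
Definition setk (n k : nat) : {set 'I_n} := [set i : 'I_n | i < k].

Definition BVU (n : nat) (V U : {set 'I_n}) : pred (Bn n) :=
  fun X => (U \subset sval X) && (sval X \proper V).

Lemma BVU_le (n : nat) (V U : {set 'I_n}) (hV : V != [set: 'I_n]) :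
  forall X : Bn n, BVU V U X -> Ble X (exist _ V hV).
Proof. by move=> X /andP[_ /proper_sub]. Qed.

(* Condition A^V_U: the canonical functor colim_{B(V:U)} Phi -> Phi(V) is     *)
(* injective on objects (only meaningful for V proper, which is assumed).     *)
Definition A_cond (n : nat) (Phi : Diagram (@Ble n)) (V U : {set 'I_n}) : Prop :=
  forall hV : V != [set: 'I_n],
    injective (@colim_to_obj _ _ Phi (BVU V U) (exist _ V hV) (BVU_le hV)).

(* Main.v *)
Require Import Defs.
From HB Require Import structures.
From mathcomp Require Import all_boot.
From Stdlib Require Import Relations.Relation_Operators.
From Stdlib Require Import ProofIrrelevance FunctionalExtensionality PropExtensionality ClassicalEpsilon.
Require Import Defs.
From mathcomp Require Import zify.
Set Implicit Arguments. Unset Strict Implicit. Unset Printing Implicit Defensive.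



Section Transp.
Variable G : Gpd.
Lemma ht_comp (x x' y z : G) (E : x = x') (a : hom x y) (b : hom y z) :
  htransport E erefl (gcomp a b) = gcomp (htransport E erefl a) b.
Proof. by case: x' / E. Qed.
Lemma ht_comp2 (x x' y y' z : G) (Ex : x = x') (Ey : y = y') (a : hom x y) (b : hom y' z) :
  gcomp (htransport Ex erefl a) (htransport (esym Ey) erefl b) = gcomp (htransport Ex Ey a) b.
Proof. by case: y' / Ey b => b; case: x' / Ex. Qed.
End Transp.

Section FlatMap.
Variables (L1 L2 : Type) (linv1 : L1 -> L1) (B1 : seq L1 -> seq L1 -> Prop)
  (linv2 : L2 -> L2) (B2 : seq L2 -> seq L2 -> Prop) (F : L1 -> seq L2).
Definition flatF (w : seq L1) := flatten (map F w).
Lemma flatF_cat u v : flatF (u ++ v) = flatF u ++ flatF v.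
Proof. by rewrite /flatF map_cat flatten_cat. Qed.
Hypothesis HB : forall l r, B1 l r -> weq linv2 B2 (flatF l) (flatF r).
Hypothesis Hinv : forall l, weq linv2 B2 (F (linv1 l)) (winv linv2 (F l)).

Lemma flatF_winv w : weq linv2 B2 (flatF (winv linv1 w)) (winv linv2 (flatF w)).
Proof.
elim: w => [|l w IH]; first exact: rst_refl.
rewrite winv_cons flatF_cat /= winv_cat /flatF /= cats0.
exact: weq_cat IH (Hinv l).
Qed.

Lemma weq_flatF u v : weq linv1 B1 u v -> weq linv2 B2 (flatF u) (flatF v).
Proof.
have Hbr : forall l r, brel linv1 B1 l r -> weq linv2 B2 (flatF l) (flatF r).
  move=> l r; elim=> [l' r' H|l' r' _ IH]; first exact: HB.
  apply: rst_trans (flatF_winv _) _; apply: rst_trans (weq_inv IH) _.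
  exact: rst_sym (flatF_winv _).
elim=> [a b H|a|a b _ IH|a b c _ IH1 _ IH2].
- case: H => [u' l r v' H|u' a' v'|u' a' v']; rewrite !flatF_cat.
  + by apply: weq_catl; apply: weq_catr; apply: Hbr.
  + apply: weq_catl; rewrite -[X in weq _ _ _ X]cat0s; apply: weq_catr.
    rewrite /flatF /= cats0; apply: rst_trans (weq_catl _ (Hinv a')) _.
    exact: weq_invr.
  + apply: weq_catl; rewrite -[X in weq _ _ _ X]cat0s; apply: weq_catr.
    rewrite /flatF /= cats0.
    apply: rst_trans (weq_catr _ (Hinv a')) _; exact: weq_invl.
- exact: rst_refl.
- exact: rst_sym.
- exact: rst_trans IH1 IH2.
Qed.
End FlatMap.

Section Gen.
Variables (I : Type) (le : I -> I -> bool) (D : Diagram le).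
Hypothesis lerefl : forall i, le i i.

Notation W := (@weq (gL D) (@glinv _ _ D) (@gB _ _ D)).
Notation gO := (gO D).

Lemma W_refl u : W u u. Proof. exact: rst_refl. Qed.
Lemma W_sym u v : W u v -> W v u. Proof. exact: rst_sym. Qed.
Lemma W_trans u v w : W u v -> W v w -> W u w. Proof. exact: rst_trans. Qed.
Lemma W_cat u u' v v' : W u u' -> W v v' -> W (u ++ v) (u' ++ v').
Proof. exact: weq_cat. Qed.
Lemma W_catl s u v : W u v -> W (s ++ u) (s ++ v). Proof. exact: weq_catl. Qed.
Lemma W_catr s u v : W u v -> W (u ++ s) (v ++ s). Proof. exact: weq_catr. Qed.
Lemma W_cons (l : gL D) u v : W u v -> W (l :: u) (l :: v).
Proof. exact: (weq_catl [:: l]). Qed.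

Lemma W_cancel_r (a : gL D) : W [:: a; glinv a] [::].
Proof. exact: (rst_step _ _ _ _ (ws_cancel_r _ _ [::] a [::])). Qed.
Lemma W_cancel_l (a : gL D) : W [:: glinv a; a] [::].
Proof. exact: (rst_step _ _ _ _ (ws_cancel_l _ _ [::] a [::])). Qed.

Lemma glinvK (l : gL D) : glinv (glinv l) = l.
Proof. by case: l => [[] m]. Qed.

Lemma winvK (w : seq (gL D)) : winv (@glinv _ _ D) (winv (@glinv _ _ D) w) = w.
Proof. by rewrite /winv map_rev revK -map_comp (eq_map glinvK) map_id. Qed.

Definition stpe (i j : I) (h : le i j) (x : D i) (y : D j) (e : dmap D h x = y) : gL D :=
  (true, @GMor _ _ D i j h x y y (gid y) e).
Definition stp (i j : I) (h : le i j) (x : D i) : gL D := @stpe i j h x _ erefl.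

Definition Fl (i : I) (x y : D i) (f : hom x y) : gL D :=
  (true, @GMor _ _ D i i (lerefl i) x x y f (dmap_id_ob (lerefl i) x)).

Lemma L_comp i j k (h1 : le i j) (h2 : le j k) (h3 : le i k) (x : D i) (x1 y : D j)
  (e1 : dmap D h1 x = x1) (y1 z : D k) (e2 : dmap D h2 y = y1) (f : hom x1 y) (g : hom y1 z)
  (e3 : dmap D h3 x = dmap D h2 x1) :
  W [:: (true, @GMor _ _ D i j h1 x x1 y f e1); (true, @GMor _ _ D j k h2 y y1 z g e2)]
    [:: (true, @GMor _ _ D i k h3 x _ z (gcomp (fmor (dmap D h2) f) (htransport (esym e2) erefl g)) e3)].
Proof. by case: y1 / e2 g => g /=; apply: weq_B; apply: gb_comp. Qed.

Lemma L_geq i j (h : le i j) (x : D i) (x1 x2 y : D j) (E : x1 = x2) (e1 : dmap D h x = x1) (e2 : dmap D h x = x2)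
  (f : hom x1 y) (g : hom x2 y) :
  geq (htransport E erefl f) g ->
  W [:: (true, @GMor _ _ D i j h x x1 y f e1)] [:: (true, @GMor _ _ D i j h x x2 y g e2)].
Proof.
case: x2 / E e2 g => e2 g /= H.
rewrite (proof_irrelevance _ e2 e1).
by apply: weq_B; exact: (@gb_geq _ _ D (@GMor _ _ D i j h x x1 y f e1) g H).
Qed.

Arguments L_geq {i j h x x1 x2 y} E {e1 e2 f g} _.

Lemma L_irr i j (h h' : le i j) (x : D i) (x1 y : D j) (e : dmap D h x = x1) (e' : dmap D h' x = x1)
  (f : hom x1 y) :
  @GMor _ _ D i j h x x1 y f e = @GMor _ _ D i j h' x x1 y f e'.
Proof. have E : h = h' by apply: proof_irrelevance. by case: h' / E e'=> e'; rewrite (proof_irrelevance _ e e'). Qed.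

Lemma stpe_tri i j k (h1 : le i j) (h2 : le j k) (h3 : le i k) (x : D i) (y : D j) (z : D k)
  (e1 : dmap D h1 x = y) (e2 : dmap D h2 y = z) (e3 : dmap D h3 x = z) :
  W [:: stpe e1; stpe e2] [:: stpe e3].
Proof.
rewrite /stpe.
have e3' : dmap D h3 x = dmap D h2 y by rewrite e3 e2.
apply: (W_trans (@L_comp _ _ _ h1 h2 h3 x y y e1 z z e2 (gid y) (gid z) e3')).
apply: (L_geq e2) => /=. rewrite ht_comp.
rewrite ht_comp2; case: z / e2 e3 e3' => e3 e3' /=.
exact: geq_trans (gid_r _) (fmor_id _ _).
Qed.

Lemma stpe_id i (h : le i i) (x y : D i) (e : dmap D h x = y) : W [:: stpe e] [::].
Proof.
have Ey : y = x by rewrite -e dmap_id_ob.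
move: e; rewrite Ey => e; rewrite /stpe; apply: weq_B; exact: (@gb_id _ _ D i h x e).
Qed.

Lemma Fl_geq i (x y : D i) (f g : hom x y) : Defs.geq f g -> W [:: Fl f] [:: Fl g].
Proof. by move=> H; apply: weq_B; exact: (@gb_geq _ _ D (@GMor _ _ D i i _ x x y f _) g H). Qed.

Lemma Fl_id i (x : D i) : W [:: Fl (gid x)] [::].
Proof. by apply: weq_B; exact: (@gb_id _ _ D i _ x _). Qed.

Lemma Fl_comp i (x y z : D i) (f : hom x y) (g : hom y z) :
  W [:: Fl f; Fl g] [:: Fl (gcomp f g)].
Proof.
rewrite /Fl.
apply: (W_trans (@L_comp _ _ _ (lerefl i) (lerefl i) (lerefl i) x x y (dmap_id_ob _ x) y z (dmap_id_ob _ y) f g erefl)).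
apply: (L_geq (dmap_id_ob (lerefl i) x)); rewrite ht_comp ht_comp2.
apply: gcomp_geq; [exact: dmap_id_mor | exact: geq_refl].
Qed.

Lemma Fl_inv i (x y : D i) (f : hom x y) : W [:: Fl (ginv f)] [:: glinv (Fl f)].
Proof.
apply: (W_trans (v := [:: Fl (ginv f); Fl f; glinv (Fl f)])).
  by apply: W_sym; apply: (W_catl [:: Fl (ginv f)]); apply: W_cancel_r.
apply: (W_trans (v := [:: Fl (gid y); glinv (Fl f)])).
  apply: (@W_catr [:: glinv (Fl f)] [:: Fl (ginv f); Fl f] [:: Fl (gid y)]).
  apply: W_trans (Fl_comp _ _) _; apply: Fl_geq; exact: ginv_l.
exact: (W_catr [:: glinv (Fl f)] (Fl_id y)).
Qed.

Lemma Fl_map i j (h : le i j) (x y : D i) (f : hom x y) :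
  W [:: Fl f; stp h y] [:: stp h x; Fl (fmor (dmap D h) f)].
Proof.
rewrite /Fl /stp /stpe.
have E : dmap D h x = dmap D (lerefl j) (dmap D h x) by rewrite dmap_id_ob.
apply: (W_trans (@L_comp _ _ _ (lerefl i) h h x x y (dmap_id_ob _ x) _ _ erefl f (gid _) erefl)).
apply: W_trans; last first.
  apply: W_sym.
  exact: (@L_comp _ _ _ h (lerefl j) h x _ _ erefl _ _ (dmap_id_ob _ _) (gid _) (fmor (dmap D h) f) E).
apply: (L_geq E).
rewrite ht_comp.
apply: geq_trans (gid_r _) _.
apply: geq_trans; last first.
  apply: geq_sym; apply: gcomp_geq; first exact: fmor_id.
  exact: geq_refl.
apply: geq_trans; last by apply: geq_sym; apply: gid_l.
by rewrite (proof_irrelevance _ E (esym (dmap_id_ob _ _))); apply: geq_refl.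
Qed.

Lemma stpe_Fl i j (h : le i j) (x : D i) (x' y : D j) (e : dmap D h x = x') (f : hom x' y) :
  W [:: stpe e; Fl f] [:: (true, @GMor _ _ D i j h x x' y f e)].
Proof.
rewrite /Fl /stpe.
have E3 : dmap D h x = dmap D (lerefl j) x' by rewrite dmap_id_ob.
apply: (W_trans (@L_comp _ _ _ h (lerefl j) h x x' x' e _ _ (dmap_id_ob _ x') (gid _) f E3)).
apply: (L_geq (dmap_id_ob (lerefl j) x')).
rewrite ht_comp ht_comp2.
apply: geq_trans (gid_l _).
apply: gcomp_geq; [exact: dmap_id_mor | exact: geq_refl].
Qed.


Section Walk.
Variable Q : pred I.

Inductive swalk : gO -> seq (gL D) -> gO -> Prop :=
| sw_nil a : swalk a [::] a
| sw_fwd i j (h : le i j) (x : D i) w b : Q i -> Q j ->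
    swalk (existT _ j (dmap D h x)) w b -> swalk (existT _ i x) (stp h x :: w) b
| sw_bwd i j (h : le i j) (x : D i) w b : Q i -> Q j ->
    swalk (existT _ i x) w b -> swalk (existT _ j (dmap D h x)) (glinv (stp h x) :: w) b.

Lemma swalk_wf a w b : swalk a w b -> wf (@gsrc _ _ D) (@gtgt _ _ D) a w b.
Proof. by elim=> //= *; split. Qed.

Lemma swalk_cat a u b v c : swalk a u b -> swalk b v c -> swalk a (u ++ v) c.
Proof.
elim=> //= [i j h x w b' Qi Qj _ IH | i j h x w b' Qi Qj _ IH] H.
- by apply: sw_fwd => //; apply: IH.
- by apply: sw_bwd => //; apply: IH.
Qed.

Lemma swalk_inv a w b : swalk a w b -> swalk b (winv (@glinv _ _ D) w) a.
Proof.
elim=> [a'|i j h x w' b' Qi Qj _ IH|i j h x w' b' Qi Qj _ IH]; first exact: sw_nil.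
- rewrite winv_cons; apply: swalk_cat IH _.
  by apply: sw_bwd => //; apply: sw_nil.
- rewrite winv_cons glinvK; apply: swalk_cat IH _.
  by apply: sw_fwd => //; apply: sw_nil.
Qed.

Lemma swalk_Q a w b : swalk a w b -> Q (projT1 a) -> Q (projT1 b).
Proof. by elim=> //= i j h x w' b' Qi Qj _ IH _; apply: IH. Qed.

Lemma swalk_inv_fun (X : Type) (f : gO -> X) :
  (forall i j (h : le i j) x, Q i -> Q j -> f (existT _ i x) = f (existT _ j (dmap D h x))) ->
  forall a w b, swalk a w b -> f a = f b.
Proof.
move=> Hf a w b; elim=> // [i j h x w' b' Qi Qj _ IH|i j h x w' b' Qi Qj _ IH].
- by rewrite -IH; apply: Hf.
- by rewrite -IH; symmetry; apply: Hf.
Qed.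

Lemma walk_W (g : gO -> seq (gL D)) (Ok : gO -> Prop) :
  (forall i j (h : le i j) x, Q i -> Q j -> (Ok (existT _ i x) <-> Ok (existT _ j (dmap D h x)))) ->
  (forall i j (h : le i j) x, Q i -> Q j -> Ok (existT _ i x) ->
       W (g (existT _ i x)) (stp h x :: g (existT _ j (dmap D h x)))) ->
  forall a w b, swalk a w b -> Ok a -> W (g a) (w ++ g b).
Proof.
move=> Hok Hg a w b; elim=> [a'|i j h x w' b' Qi Qj _ IH|i j h x w' b' Qi Qj _ IH] Oa.
- exact: W_refl.
- apply: W_trans (Hg _ _ h x Qi Qj Oa) _; apply: W_cons; apply: IH.
  by apply/(Hok _ _ h x Qi Qj).
- have Oi : Ok (existT _ i x) by apply/(Hok _ _ h x Qi Qj).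
  apply: W_trans; last exact: (W_cons (glinv (stp h x)) (IH Oi)).
  apply: W_trans; last first.
    apply: W_cons; apply: W_sym; exact: (Hg _ _ h x Qi Qj Oi).
  rewrite -[X in W X _]cat0s -[_ :: _ :: _]/([:: _; _] ++ _).
  apply: W_catr; apply: W_sym; exact: W_cancel_l.
Qed.
End Walk.

Definition Contr (Q : pred I) (rep : gO -> gO) (p : gO -> seq (gL D)) : Prop :=
  [/\ (forall a, Q (projT1 a) -> swalk Q a (p a) (rep a)),
      (forall a, Q (projT1 a) -> W (p (rep a)) [::]),
      (forall i j (h : le i j) x, Q i -> Q j -> rep (existT _ i x) = rep (existT _ j (dmap D h x))) &
      (forall i j (h : le i j) x, Q i -> Q j ->
          W (p (existT _ i x)) (stp h x :: p (existT _ j (dmap D h x))))].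

Lemma Contr_stpe Q rep p : Contr Q rep p ->
  forall i j (h : le i j) x y (E : dmap D h x = y), Q i -> Q j ->
  rep (existT _ i x) = rep (existT _ j y) /\ W (p (existT _ i x)) (stpe E :: p (existT _ j y)).
Proof. by case=> _ _ H3 H4 i j h x y E Qi Qj; case: y / E; split; [apply: H3 | apply: H4]. Qed.

Section Equiv.
Variables (rep : gO -> gO) (p : gO -> seq (gL D)).
Hypothesis HC : Contr (@Ptrue I) rep p.

Notation PT := (@Ptrue I).
Notation WC := (@weq (cedge D PT) (@clinv _ _ D PT) (@cB _ _ D PT)).

Definition elt (a : cpt D PT) : gO := existT _ (cidx a) (cobj a).

Lemma rep_step a b : cRel a b -> rep (elt a) = rep (elt b).
Proof. case=> h Hb; rewrite /elt Hb; case: HC => _ _ H3 _; exact: H3. Qed.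

Lemma rep_crst a b : clos_refl_sym_trans _ (@cRel _ _ D PT) a b -> rep (elt a) = rep (elt b).
Proof. elim=> [x y H|x|x y _ IH|x y z _ IH1 _ IH2] //; [exact: rep_step | by rewrite IH1]. Qed.

Definition Gob (c : cO D PT) : gO :=
  rep (elt (proj1_sig (constructive_indefinite_description _ (proj2_sig c)))).

Lemma GobE a : Gob (qcls (@cRel _ _ D PT) a) = rep (elt a).
Proof.
rewrite /Gob; case: constructive_indefinite_description => x /= Ex.
apply: rep_crst; apply: rst_sym; rewrite Ex; exact: rst_refl.
Qed.

Definition pe (i : I) (x : D i) := p (existT _ i x).
Definition Gw (e : cedge D PT) : seq (gL D) :=
  winv (@glinv _ _ D) (pe (esrc e)) ++ Fl (emor e) :: pe (etgt e).

Lemma p_wf a : wf (@gsrc _ _ D) (@gtgt _ _ D) a (p a) (rep a).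
Proof. by case: HC => H1 _ _ _; apply: swalk_wf; apply: H1. Qed.

Lemma Gw_wf e : wf (@gsrc _ _ D) (@gtgt _ _ D) (Gob (csrc e)) (Gw e) (Gob (ctgt e)).
Proof.
rewrite /csrc /ctgt !GobE /Gw; apply: wf_cat.
  exact: (wf_inv (@gsrc_linv _ _ D) (@gtgt_linv _ _ D) (p_wf _)).
by split => //; apply: p_wf.
Qed.

Lemma Gmw_wf a w b : wf (@csrc _ _ D PT) (@ctgt _ _ D PT) a w b ->
  wf (@gsrc _ _ D) (@gtgt _ _ D) (Gob a) (flatF Gw w) (Gob b).
Proof.
elim: w a => [|e w IH] a /=; first by move->.
by case=> -> H; apply: wf_cat (Gw_wf e) (IH _ H).
Qed.

Lemma Gw_inv e : W (Gw (clinv e)) (winv (@glinv _ _ D) (Gw e)).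
Proof.
rewrite /Gw /= winv_cat winv_cons winvK -!catA.
apply: W_catl => /=; apply: (@W_catr _ [:: Fl (ginv (emor e))] [:: glinv (Fl (emor e))]).
exact: Fl_inv.
Qed.

Lemma Gw_B l r : cB l r -> W (flatF Gw l) (flatF Gw r).
Proof.
case=> [i q x y z f g|i q x|i j q q' h x y f|i q x y f g H]; rewrite /flatF /= !cats0 /Gw -?catA.
- apply: W_catl => /=; rewrite catA.
  apply: W_trans (W_cons _ (W_catr _ (weq_invr _ _ _))) _ => /=.
  exact: (W_catr _ (Fl_comp f g)).
- apply: W_trans (weq_invl _ _ _); apply: W_catl.
  exact: (W_catr _ (Fl_id x)).
- case: HC => _ _ _ H4.
  have Ex := H4 _ _ h x erefl erefl; have Ey := H4 _ _ h y erefl erefl.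
  apply: W_trans (W_catr _ (weq_inv Ex)) _; rewrite winv_cons -catA /=.
  apply: W_catl; apply: W_trans (W_cons _ (W_cons _ Ey)) _.
  rewrite /pe -[X in W X _]/([:: glinv (stp h x); Fl f; stp h y] ++ _).
  rewrite -[X in W _ X]/([:: Fl (fmor (dmap D h) f)] ++ _); apply: W_catr.
  apply: W_trans (W_cons _ (Fl_map h f)) _.
  rewrite -[X in W _ X]cat0s -[X in W X _]/([:: _; _] ++ [:: _]); apply: W_catr.
  exact: W_cancel_l.
- apply: W_catl => /=; exact: (W_catr _ (Fl_geq H)).
Qed.

Definition Gfun : Functor (colim D PT) (twocolim D).
Proof.
refine (@Functor_ (colim D PT) (twocolim D) Gob
  (fun a b f => exist _ (flatF Gw (sval f)) (Gmw_wf (proj2_sig f))) _ _ _).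
- move=> a b f g /= H; exact: (weq_flatF Gw_B Gw_inv H).
- move=> a /=; exact: rst_refl.
- move=> a b c f g /=; rewrite flatF_cat; exact: rst_refl.
Defined.

Lemma Fl_stpe i j (h : le i j) (x : D i) (x' y : D j) (e : dmap D h x = x') (f : hom x' y) :
  W [:: Fl f] [:: glinv (stpe e); (true, @GMor _ _ D i j h x x' y f e)].
Proof.
apply: W_sym; apply: W_trans (W_cons _ (W_sym (stpe_Fl e f))) _.
rewrite -[X in W _ X]cat0s -[X in W X _]/([:: _; _] ++ [:: _]); apply: W_catr.
exact: W_cancel_l.
Qed.

Lemma Gw_delta l : W (Gw (delta_l l)) (winv (@glinv _ _ D) (p (gsrc l)) ++ l :: p (gtgt l)).
Proof.
case: l => [[] [i j h x x' y f e]]; rewrite /Gw /delta_l /gsrc /gtgt /=.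
- have [_ H] := Contr_stpe HC e erefl erefl.
  apply: W_sym; apply: W_trans (W_catr _ (weq_inv H)) _.
  rewrite winv_cons -catA; apply: W_catl => /=.
  apply: (W_catr _ (u := [:: _; _]) (v := [:: _])); apply: W_sym; exact: Fl_stpe.
- have [_ H] := Contr_stpe HC e erefl erefl.
  apply: W_catl; rewrite /pe; apply: W_trans; last first.
    by apply: W_cons; apply: W_sym; exact: H.
  apply: (W_catr _ (u := [:: _]) (v := [:: _; _])).
  apply: W_trans (Fl_inv _) _.
  have := weq_inv (Fl_stpe e f); rewrite /winv /= => H'; exact: H'.
Qed.

Lemma Key1 a w b : wf (@gsrc _ _ D) (@gtgt _ _ D) a w b ->
  W (flatF Gw (map (@delta_l _ _ D) w)) (winv (@glinv _ _ D) (p a) ++ w ++ p b).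
Proof.
elim: w a => [|l w IH] a /=.
  by move=> ->; apply: W_sym; apply: weq_invl.
case=> -> H; rewrite /flatF /= -/(flatF Gw _).
apply: W_trans (W_cat (Gw_delta l) (IH _ H)) _.
rewrite -!catA; apply: W_catl => /=; apply: W_cons.
rewrite catA; apply: W_trans (W_catr _ (weq_invr _ _ _)) _; exact: W_refl.
Qed.

Lemma Gob_delta a : Gob (delta_ob a) = rep a.
Proof. by rewrite /delta_ob GobE; case: a. Qed.

Lemma eta_wf a : wf (@gsrc _ _ D) (@gtgt _ _ D) (Gob (delta_ob a)) (winv (@glinv _ _ D) (p a)) a.
Proof. rewrite Gob_delta; exact: (wf_inv (@gsrc_linv _ _ D) (@gtgt_linv _ _ D) (p_wf _)). Qed.

Lemma Nat1 : NatIso (Fcomp (delta D) Gfun) (Fid (twocolim D)).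
Proof.
exists (fun a => exist _ (winv (@glinv _ _ D) (p a)) (eta_wf a)).
move=> a b [w Hw] /=.
apply: W_trans (W_catr _ (Key1 Hw)) _.
rewrite -!catA; apply: (W_catl (winv _ (p a))).
rewrite -[X in W _ X]cats0; apply: (W_catl w); exact: weq_invr.
Qed.

Lemma cO_eta (c : cO D PT) : exists a, c = qcls (@cRel _ _ D PT) a.
Proof.
case: c => P [x E]; exists x; subst P; rewrite /qcls; congr exist.
Qed.

Lemma cpt_eta (a : cpt D PT) : a = @CPt _ _ D PT (cidx a) erefl (cobj a).
Proof. by case: a => i q x /=; congr CPt; apply: proof_irrelevance. Qed.

Lemma swalk_crst u w v : swalk PT u w v ->
  clos_refl_sym_trans _ (@cRel _ _ D PT) (@CPt _ _ D PT (projT1 u) erefl (projT2 u))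
    (@CPt _ _ D PT (projT1 v) erefl (projT2 v)).
Proof.
elim=> [a|i j h x w' b _ _ _ IH|i j h x w' b _ _ _ IH] /=.
- exact: rst_refl.
- by apply: rst_trans IH; apply: rst_step; exists h.
- by apply: rst_trans IH; apply: rst_sym; apply: rst_step; exists h.
Qed.

Lemma theta_eq c : delta_ob (Gob c) = c.
Proof.
have [a ->] := cO_eta c; rewrite GobE /delta_ob.
apply: qcls_eq.
have [H1 _ _ _] := HC.
have := swalk_crst (H1 (elt a) erefl); rewrite /= -cpt_eta => H; exact: rst_sym H.
Qed.

Lemma theta_wf c : wf (@csrc _ _ D PT) (@ctgt _ _ D PT) (delta_ob (Gob c)) [::] c.
Proof. exact: theta_eq. Qed.

Lemma swalk_delta u w v : swalk PT u w v -> WC (map (@delta_l _ _ D) w) [::].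
Proof.
elim=> [a|i j h x w' b _ _ _ IH|i j h x w' b _ _ _ IH] /=.
- exact: rst_refl.
- apply: rst_trans (weq_catr _ (weq_B _ (cb_id _ _))) _; exact: IH.
- apply: rst_trans (weq_catr _ (weq_B _ (cb_geq _ _))) _; last first.
    apply: rst_trans (weq_catr _ (weq_B _ (cb_id _ _))) _; exact: IH.
  apply: geq_trans (geq_sym (gid_r _)) _; exact: ginv_l.
Qed.

Lemma cedge_eta (e : cedge D PT) : e = @CEdge _ _ D PT (eidx e) erefl (esrc e) (etgt e) (emor e).
Proof. by case: e => i q x y f /=; rewrite (proof_irrelevance _ q erefl). Qed.

Lemma Key2 w : WC (map (@delta_l _ _ D) (flatF Gw w)) w.
Proof.
elim: w => [|e w IH]; first exact: rst_refl.
rewrite /flatF /= -/(flatF Gw _) map_cat -[X in WC _ X]/([:: e] ++ w).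
apply: weq_cat IH; rewrite /Gw map_cat /=.
have [H1 _ _ _] := HC.
rewrite -[X in WC _ X]cat0s; apply: weq_cat.
  exact: (swalk_delta (swalk_inv (H1 _ erefl))).
rewrite -[X in WC _ X]cats0 -[X in WC X _]/([:: _] ++ _); apply: weq_cat.
  have -> : delta_l (Fl (emor e)) = e by rewrite [RHS]cedge_eta.
  exact: rst_refl.
exact: (swalk_delta (H1 _ erefl)).
Qed.

Lemma Nat2 : NatIso (Fcomp Gfun (delta D)) (Fid (colim D PT)).
Proof.
exists (fun c => exist _ [::] (theta_wf c)).
move=> a b [w Hw] /=; rewrite cats0; exact: Key2.
Qed.

Lemma equiv_of_contr : IsEquivalence (delta D).
Proof. by exists Gfun; split; [exact: Nat1 | exact: Nat2]. Qed.

End Equiv.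
End Gen.



Section Sets.
Variable n : nat.
Definition Q (m : nat) (U : {set 'I_n}) : pred (Bn n) := BVU (setk n m :|: U) U.

Lemma setkS t (ht : t < n) : setk n t.+1 = Ordinal ht |: setk n t.
Proof. by apply/setP => i; rewrite !inE ltnS leq_eqVlt -val_eqE. Qed.

Lemma setk0 : setk n 0 = set0.
Proof. by apply/setP => i; rewrite !inE. Qed.

Lemma setkn : setk n n = setT.
Proof. by apply/setP => i; rewrite !inE ltn_ord. Qed.

Lemma Q0 U S : Q 0 U S = false.
Proof.
apply/negP; rewrite /Q /BVU setk0 set0U => /andP [H1 H2].
by move: (proper_sub_trans H2 H1); rewrite properxx.
Qed.

Lemma Bn_inj (S T : Bn n) : sval S = sval T -> S = T.
Proof. exact: val_inj. Qed.


Section StepSets.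
Variables (t : nat) (ht : t < n) (U : {set 'I_n}).
Hypothesis HU : U \subset [set i : 'I_n | t < i].
Let tt := Ordinal ht.
Definition Wm := setk n t :|: U.

Lemma tt_W : tt \notin Wm.
Proof.
rewrite /Wm !inE ltnn /=; apply/negP => /(subsetP HU); by rewrite inE ltnn.
Qed.

Lemma U_W : U \subset Wm. Proof. exact: subsetUr. Qed.

Lemma Q1E S : Q t.+1 U S = (U \subset sval S) && (sval S \proper tt |: Wm).
Proof. by rewrite /Q /BVU (setkS ht) /Wm setUA. Qed.

Lemma QAE S : Q t U S = (U \subset sval S) && (sval S \proper Wm).
Proof. by []. Qed.

Lemma QBE S : Q t (tt |: U) S = (tt |: U \subset sval S) && (sval S \proper tt |: Wm).
Proof. by rewrite /Q /BVU /Wm setUA [setk n t :|: _]setUC setUA. Qed.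

Lemma classQ S : Q t.+1 U S -> [|| Q t U S, sval S == Wm | Q t (tt |: U) S].
Proof.
rewrite Q1E QAE QBE => /andP [HUS HSp].
case Ht: (tt \in sval S).
  by rewrite HSp subUset sub1set Ht HUS !orbT.
have HSW : sval S \subset Wm.
  apply/subsetP => i Hi; have := subsetP (proper_sub HSp) i Hi.
  rewrite !inE; case/orP => // /eqP E; by move: Ht; rewrite -E Hi.
rewrite HUS /=; case E: (sval S == Wm) => /=; rewrite ?orbT //; apply/orP; left.
by rewrite properEneq E HSW.
Qed.

Lemma A_Q S : Q t U S -> Q t.+1 U S.
Proof.
rewrite Q1E QAE => /andP [-> H] /=; apply: proper_sub_trans H _; exact: subsetUr.
Qed.

Lemma M_Q (S : Bn n) : sval S == Wm -> Q t.+1 U S.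
Proof.
move/eqP=> E; rewrite Q1E E U_W /=; apply/properP; split; first exact: subsetUr.
by exists tt; [rewrite !inE eqxx | exact: tt_W].
Qed.

Lemma B_Q S : Q t (tt |: U) S -> Q t.+1 U S.
Proof.
rewrite Q1E QBE => /andP [H ->]; rewrite andbT; apply: subset_trans H; exact: subsetUr.
Qed.

Lemma A_tt S : Q t U S -> tt \notin sval S.
Proof.
rewrite QAE => /andP [_ /proper_sub H]; apply/negP => /(subsetP H); apply/negP; exact: tt_W.
Qed.

Lemma B_tt S : Q t (tt |: U) S -> tt \in sval S.
Proof. by rewrite QBE => /andP [/subsetP H _]; apply: H; rewrite !inE eqxx. Qed.

Lemma M_tt (S : Bn n) : sval S == Wm -> tt \notin sval S.
Proof. move/eqP => E; rewrite E; exact: tt_W. Qed.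

Lemma A_W S : Q t U S -> sval S \subset Wm.
Proof. by rewrite QAE => /andP [_ /proper_sub]. Qed.

Lemma A_witness S : Q t U S -> exists2 i, i \in Wm & i \notin tt |: sval S.
Proof.
rewrite QAE => /andP [_ /properP [_ [i Hi1 Hi2]]]; exists i => //.
rewrite !inE negb_or Hi2 andbT; apply/negP => /eqP E; move: Hi1; rewrite E; apply/negP; exact: tt_W.
Qed.

Definition upB (S : Bn n) : Bn n := insubd S (tt |: sval S).

Lemma upB_val S : Q t U S -> sval (upB S) = tt |: sval S.
Proof.
move=> HA; rewrite /upB val_insubd.
have -> // : tt |: sval S != setT.
have [i _ Hi] := A_witness HA; apply/negP => /eqP E; move: Hi; by rewrite E inE.
Qed.

Lemma le_up (S : Bn n) : Ble S (upB S).
Proof. rewrite /Ble /upB val_insubd; case: ifP => _; [exact: subsetUr | exact: subxx]. Qed.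

Lemma A_up S : Q t U S -> Q t (tt |: U) (upB S).
Proof.
move=> HA; rewrite QBE upB_val //; move: (HA); rewrite QAE => /andP [HUS HSW].
rewrite setUS //=; apply/properP; split; first by apply: setUS; exact: proper_sub.
have [i Hi1 Hi2] := A_witness HA; exists i => //; rewrite inE Hi1 orbT //.
Qed.

Lemma arr_A S T : Ble S T -> Q t.+1 U S -> Q t U T -> Q t U S.
Proof.
rewrite /Ble Q1E !QAE => HST /andP [-> _] /andP [_ HT] /=.
exact: sub_proper_trans HST HT.
Qed.

Lemma arr_M (S T : Bn n) : Ble S T -> Q t.+1 U S -> sval T == Wm -> Q t U S || (sval S == Wm).
Proof.
rewrite /Ble Q1E QAE => HST /andP [-> _] /eqP ET /=; rewrite ET in HST.
by rewrite properEneq HST andbT; case: (sval S == Wm).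
Qed.

Lemma arr_MM (S T : Bn n) : Ble S T -> sval S == Wm -> Q t.+1 U T -> sval T == Wm.
Proof.
rewrite /Ble Q1E => HST /eqP ES /andP [_ HT]; rewrite ES in HST.
case Ht: (tt \in sval T).
  have : tt |: Wm \subset sval T by rewrite subUset sub1set Ht HST.
  by move=> H; move: (sub_proper_trans H HT); rewrite properxx.
rewrite eqEsubset HST andbT; apply/subsetP => i Hi.
have := subsetP (proper_sub HT) i Hi; rewrite !inE; case/orP => // /eqP E.
by move: Ht; rewrite -E Hi.
Qed.

Lemma arr_B S T : Ble S T -> Q t (tt |: U) S -> Q t.+1 U T -> Q t (tt |: U) T.
Proof.
move=> HST HB HT; have HtT : tt \in sval T by apply: (subsetP HST); exact: B_tt.
case/or3P: (classQ HT) => // [HA|HM].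
- by move: (A_tt HA); rewrite HtT.
- by move: (M_tt HM); rewrite HtT.
Qed.

Lemma arr_up S T : Ble S T -> Q t U S -> Q t (tt |: U) T -> Ble (upB S) T.
Proof.
rewrite /Ble => HST HA HB; rewrite upB_val // subUset sub1set HST andbT; exact: B_tt.
Qed.

End StepSets.
End Sets.



Section Cube.
Variables (n : nat) (Phi : Diagram (@Ble n)).
Notation gOn := (gO Phi).
Notation W := (@weq (gL Phi) (@glinv _ _ Phi) (@gB _ _ Phi)).

Lemma stpe_irr (S T : Bn n) (h h' : Ble S T) (x : Phi S) (y : Phi T)
  (E : dmap Phi h x = y) (E' : dmap Phi h' x = y) : stpe E = stpe E'.
Proof.
have Eh : h = h' by apply: proof_irrelevance.
subst h'; by rewrite (proof_irrelevance _ E E').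
Qed.

Definition mk (a b : gOn) : seq (gL Phi) :=
  match excluded_middle_informative
          (exists h : Ble (projT1 a) (projT1 b), dmap Phi h (projT2 a) = projT2 b) with
  | left H => let (h, E) := constructive_indefinite_description _ H in [:: stpe E]
  | right _ => [::]
  end.

Lemma mkE (S T : Bn n) (h : Ble S T) (x : Phi S) (y : Phi T) (E : dmap Phi h x = y) :
  mk (existT _ S x) (existT _ T y) = [:: stpe E].
Proof.
rewrite /mk; case: excluded_middle_informative => [H|H]; last by exfalso; apply: H; exists h.
case: constructive_indefinite_description => h' E' /=; by rewrite (stpe_irr E' E).
Qed.

Lemma swalk_mono (P P' : pred (Bn n)) : (forall S, P S -> P' S) ->
  forall a w b, @swalk _ _ Phi P a w b -> @swalk _ _ Phi P' a w b.
Proof.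
move=> HP a w b; elim=> [a'|i j h x w' b' Qi Qj _ IH|i j h x w' b' Qi Qj _ IH].
- exact: sw_nil.
- by apply: sw_fwd; auto.
- by apply: sw_bwd; auto.
Qed.

Lemma crst_rep (P : pred (Bn n)) rep p : Contr P rep p ->
  forall a b, clos_refl_sym_trans _ (@cRel _ _ Phi P) a b ->
  rep (existT _ (cidx a) (cobj a)) = rep (existT _ (cidx b) (cobj b)).
Proof.
move=> [_ _ H3 _] a b; elim=> [x y [h Hy]|x|x y _ IH|x y z _ IH1 _ IH2] //.
- by rewrite Hy; apply: H3; [exact: cin | exact: cin].
- by rewrite IH1.
Qed.

Section Step.
Variables (t : nat) (ht : t < n) (U : {set 'I_n}).
Hypothesis HU : U \subset [set i : 'I_n | t < i].
Notation tt := (Ordinal ht).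
Notation QA := (Q t U).
Notation QB := (Q t (Ordinal ht |: U)).
Notation QM := (Q t.+1 U).
Variables (rA rB : gOn -> gOn) (pA pB : gOn -> seq (gL Phi)).
Hypothesis CA : @Contr _ _ Phi QA rA pA.
Hypothesis CB : @Contr _ _ Phi QB rB pB.
Hypothesis Hinj : forall (a e : gOn) (qa : QA (projT1 a)) (qe : QA (projT1 e)) (S : Bn n),
  sval S = Wm t U -> forall (ha : Ble (projT1 a) S) (he : Ble (projT1 e) S),
  dmap Phi ha (projT2 a) = dmap Phi he (projT2 e) ->
  clos_refl_sym_trans _ (@cRel _ _ Phi QA) (CPt qa (projT2 a)) (CPt qe (projT2 e)).

Definition up (a : gOn) : gOn :=
  existT _ (upB ht (projT1 a)) (dmap Phi (le_up ht (projT1 a)) (projT2 a)).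
Definition qw (c : gOn) : seq (gL Phi) := stp (le_up ht (projT1 c)) (projT2 c) :: pB (up c).

Definition Img (a : gOn) : Prop :=
  exists e : gOn, QA (projT1 e) /\
    exists h : Ble (projT1 e) (projT1 a), dmap Phi h (projT2 e) = projT2 a.

Definition pick (a : gOn) : option gOn :=
  match excluded_middle_informative (Img a) with
  | left H => Some (proj1_sig (constructive_indefinite_description _ H))
  | right _ => None
  end.

Lemma pickP a : match pick a with
  | Some e => QA (projT1 e) /\ exists h : Ble (projT1 e) (projT1 a), dmap Phi h (projT2 e) = projT2 a
  | None => ~ Img a end.
Proof.
rewrite /pick; case: excluded_middle_informative => // H.
by case: constructive_indefinite_description.
Qed.

Definition rep' (a : gOn) : gOn :=
  if QA (projT1 a) then rB (up (rA a))
  else if sval (projT1 a) == Wm t U then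
    (match pick a with Some e => rB (up (rA e)) | None => a end)
  else rB a.

Definition p' (a : gOn) : seq (gL Phi) :=
  if QA (projT1 a) then pA a ++ qw (rA a)
  else if sval (projT1 a) == Wm t U then
    (match pick a with Some e => map (@glinv _ _ Phi) (mk (rA e) a) ++ qw (rA e) | None => [::] end)
  else pB a.

Lemma notA_B S : QB S -> QA S = false.
Proof. by move=> HB; apply/negP => HA; move: (A_tt ht HU HA); rewrite (B_tt HB). Qed.
Lemma notM_B (S : Bn n) : QB S -> (sval S == Wm t U) = false.
Proof. by move=> HB; apply/negP => HM; move: (M_tt ht HU HM); rewrite (B_tt HB). Qed.
Lemma notA_M (S : Bn n) : sval S == Wm t U -> QA S = false.
Proof.
move=> /eqP HM; apply/negP; rewrite QAE HM => /andP [_]; by rewrite properxx.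
Qed.

Lemma p'_B b : QB (projT1 b) -> p' b = pB b /\ rep' b = rB b.
Proof. by move=> HB; rewrite /p' /rep' notA_B // notM_B. Qed.
Lemma p'_A a : QA (projT1 a) -> p' a = pA a ++ qw (rA a) /\ rep' a = rB (up (rA a)).
Proof. by move=> HA; rewrite /p' /rep' HA. Qed.

Lemma A_le (S T : Bn n) : sval T = Wm t U -> QA S -> Ble S T.
Proof. by move=> ET HA; rewrite /Ble ET; exact: A_W HA. Qed.

Lemma qw_walk c : QA (projT1 c) -> swalk QM c (qw c) (rB (up c)).
Proof.
move=> HA; case: c HA => S x HA /=; rewrite /qw /=.
have [H1 _ _ _] := CB.
apply: sw_fwd; [exact: A_Q | apply: B_Q; exact: A_up |].
apply: (swalk_mono (@B_Q _ _ _ _)); apply: H1 => /=; exact: A_up.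
Qed.

Lemma inv_walk (T : Bn n) (HT : sval T = Wm t U) (d : Phi T) a w b :
  swalk QA a w b -> (forall h : Ble (projT1 a) T, dmap Phi h (projT2 a) = d) ->
  (forall h : Ble (projT1 b) T, dmap Phi h (projT2 b) = d).
Proof.
elim=> // [i j h x w' b' Qi Qj _ IH|i j h x w' b' Qi Qj _ IH] /= Hx; apply: IH => /= h'.
- by rewrite (dmap_comp_ob h h' (A_le HT Qi)); apply: Hx.
- by rewrite -(dmap_comp_ob h (A_le HT Qj) h'); apply: Hx.
Qed.

Lemma mkE' (c : gOn) (T : Bn n) (h : Ble (projT1 c) T) (y : Phi T) (E : dmap Phi h (projT2 c) = y) :
  mk c (existT _ T y) = [:: stpe E].
Proof. by case: c h E => S x h E; exact: mkE. Qed.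

Lemma up_step (i j : Bn n) (h : Ble i j) (x : Phi i) : QA i -> QA j ->
  exists h' : Ble (upB ht i) (upB ht j),
    dmap Phi h' (dmap Phi (le_up ht i) x) = dmap Phi (le_up ht j) (dmap Phi h x).
Proof.
move=> Qi Qj.
have h' : Ble (upB ht i) (upB ht j).
  by rewrite /Ble (upB_val ht HU Qi) (upB_val ht HU Qj); apply: setUS.
have h3 : Ble i (upB ht j) by apply: subset_trans h (le_up ht j).
exists h'; by rewrite (dmap_comp_ob _ _ h3) (dmap_comp_ob _ _ h3).
Qed.

Lemma C1 a : QM (projT1 a) -> swalk QM a (p' a) (rep' a).
Proof.
have [A1 _ _ _] := CA; have [B1 _ _ _] := CB.
move=> Ha; case/or3P: (classQ ht Ha) => [HA|HM|HB].
- have [-> ->] := p'_A HA.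
  apply: swalk_cat; first exact: (swalk_mono (@A_Q _ _ ht _) (A1 a HA)).
  apply: qw_walk; exact: (swalk_Q (A1 a HA) HA).
- rewrite /p' /rep' (notA_M HM) HM.
  have := pickP a; case: (pick a) => [e [He [h Eh]]|Hn]; last exact: sw_nil.
  have HcA := swalk_Q (A1 e He) He.
  have hc := A_le (eqP HM) HcA.
  have Ec := inv_walk (eqP HM) (A1 e He)
    (fun h' => etrans (congr1 (fun hh => dmap Phi hh (projT2 e)) (proof_irrelevance _ h' h)) Eh) hc.
  move: HcA hc Ec; move: (rA e) => c HcA hc Ec.
  case: a Ha HM h Eh hc Ec => S y Ha HM h Eh hc /= Ec; rewrite (mkE' Ec) /=.
  clear h Eh; move: Ha HM hc Ec => /= Ha HM hc Ec.
  case: y / Ec Ha HM => Ha HM.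
  case: c HcA hc => Sc xc HcA hc /=.
  apply: sw_bwd; [exact: A_Q | exact: Ha |].
  exact: (qw_walk (c := existT _ Sc xc) HcA).
- have [-> ->] := p'_B HB; apply: (swalk_mono (@B_Q _ _ _ _)); exact: B1.
Qed.

Lemma C2 a : QM (projT1 a) -> W (p' (rep' a)) [::].
Proof.
have [A1 _ _ _] := CA; have [B1 B2 _ _] := CB.
have key : forall c, QA (projT1 c) -> W (p' (rB (up c))) [::].
  move=> c Hc; have HBu := A_up ht HU Hc.
  have HBr := swalk_Q (B1 (up c) HBu) HBu.
  rewrite (p'_B HBr).1; exact: B2.
move=> Ha; case/or3P: (classQ ht Ha) => [HA|HM|HB].
- rewrite (p'_A HA).2; apply: key; exact: (swalk_Q (A1 a HA) HA).
- rewrite /rep' (notA_M HM) HM.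
  have := pickP a; case E: (pick a) => [e|] H.
    case: H => He _; apply: key; exact: (swalk_Q (A1 e He) He).
  by rewrite /p' (notA_M HM) HM E; exact: rst_refl.
- rewrite (p'_B HB).2; have HBr := swalk_Q (B1 _ HB) HB.
  rewrite (p'_B HBr).1; exact: B2.
Qed.

Lemma Carr (S T : Bn n) (h : Ble S T) (x : Phi S) : QM S -> QM T ->
  rep' (existT _ S x) = rep' (existT _ T (dmap Phi h x)) /\ W (p' (existT _ S x)) (stp h x :: p' (existT _ T (dmap Phi h x))).
Proof.
have [A1 A2 A3 A4] := CA; have [B1 B2 B3 B4] := CB.
move=> HS HT; case/or3P: (classQ ht HS) => [AS|MS|BS].
- case/or3P: (classQ ht HT) => [AT|MT|BT].
  + have [-> ->] := p'_A (a := existT _ S x) AS.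
    have [-> ->] := p'_A (a := existT _ T (dmap Phi h x)) AT.
    rewrite (A3 _ _ h x AS AT); split => //.
    exact: (W_catr _ (A4 _ _ h x AS AT)).
  +
    have HT' : sval T = Wm t U := eqP MT.
    have := pickP (existT _ T (dmap Phi h x)); case E: (pick _) => [e|] H; last first.
      by exfalso; apply: H; exists (existT _ S x); split => //; exists h.
    case: e E H => Se xe E [He [he Ee]] /=.
    have Hc := @Hinj (existT _ S x) (existT _ Se xe) AS He T HT' h he (esym Ee).
    have Erc := crst_rep CA Hc; rewrite /= in Erc.
    have [-> ->] := p'_A (a := existT _ S x) AS.
    rewrite /p' /rep' /= (notA_M MT) MT E -Erc; split => //.
    have Hw0 := A1 (existT _ S x) AS.
    have HcA := swalk_Q Hw0 AS; move: HcA Hw0; move: (rA (existT _ S x)) => c HcA Hw0.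
    have hc := A_le HT' HcA.
    have Oa : forall hb : Ble S T, dmap Phi hb x = dmap Phi h x.
      by move=> hb; rewrite (proof_irrelevance _ hb h).
    have Ec := inv_walk HT' Hw0 Oa hc.
    rewrite (mkE' Ec) /=.
    pose d := existT (fun i => Phi i) T (dmap Phi h x).
    pose Ok := fun b : gOn => forall hb : Ble (projT1 b) T, dmap Phi hb (projT2 b) = dmap Phi h x.
    have Hok : forall (i j : Bn n) (h1 : Ble i j) (x1 : Phi i), QA i -> QA j ->
        (Ok (existT _ i x1) <-> Ok (existT _ j (dmap Phi h1 x1))).
      move=> i j h1 x1 Qi Qj; rewrite /Ok /=; split => H0 hb.
      - by rewrite (dmap_comp_ob h1 hb (A_le HT' Qi)); apply: H0.
      - by rewrite -(dmap_comp_ob h1 (A_le HT' Qj) hb); apply: H0.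
    have Hg : forall (i j : Bn n) (h1 : Ble i j) (x1 : Phi i), QA i -> QA j -> Ok (existT _ i x1) ->
        W (mk (existT _ i x1) d ++ [:: glinv (stpe Ec)])
          (stp h1 x1 :: (mk (existT _ j (dmap Phi h1 x1)) d ++ [:: glinv (stpe Ec)])).
      move=> i j h1 x1 Qi Qj Oi.
      have Oj := (proj1 (Hok _ _ h1 x1 Qi Qj)) Oi.
      rewrite (mkE (Oi (A_le HT' Qi))) (mkE (Oj (A_le HT' Qj))).
      apply: W_sym.
      exact: (W_catr _ (u := [:: _; _]) (v := [:: _]) (stpe_tri _ _ _)).
    have Hw := walk_W (g := fun b => mk b d ++ [:: glinv (stpe Ec)]) Hok Hg Hw0 Oa.
    rewrite /= (mkE (h := h) (erefl (dmap Phi h x))) (mkE' Ec) in Hw.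
    rewrite -[X in W _ X]/([:: stp h x; glinv (stpe Ec)] ++ qw c); apply: W_catr.
    apply: W_trans (W_sym Hw).
    rewrite -[X in W X _]cats0; apply: W_catl; apply: W_sym; exact: W_cancel_r.
  +
    have hu := arr_up HU h AS BT.
    have Eu : dmap Phi hu (dmap Phi (le_up ht S) x) = dmap Phi h x.
      exact: (dmap_comp_ob (le_up ht S) hu h).
    have HBu := A_up ht HU AS.
    have [Er Ew] := Contr_stpe CB Eu HBu BT.
    have [-> ->] := p'_A (a := existT _ S x) AS.
    have [-> ->] := p'_B (b := existT _ T (dmap Phi h x)) BT.
    have Hinvu : forall (i j : Bn n) (h1 : Ble i j) (x1 : Phi i), QA i -> QA j ->
        rB (up (existT _ i x1)) = rB (up (existT _ j (dmap Phi h1 x1))).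
      move=> i j h1 x1 Qi Qj; have [h' E'] := up_step h1 x1 Qi Qj.
      exact: (Contr_stpe CB E' (A_up ht HU Qi) (A_up ht HU Qj)).1.
    split.
      have E0 := swalk_inv_fun (f := fun a => rB (up a)) Hinvu (A1 (existT _ S x) AS).
      rewrite /= in E0; rewrite -E0; exact: Er.
    have Hg : forall (i j : Bn n) (h1 : Ble i j) (x1 : Phi i), QA i -> QA j -> True ->
        W (qw (existT _ i x1)) (stp h1 x1 :: qw (existT _ j (dmap Phi h1 x1))).
      move=> i j h1 x1 Qi Qj _; have [h' E'] := up_step h1 x1 Qi Qj.
      have [_ Ew'] := Contr_stpe CB E' (A_up ht HU Qi) (A_up ht HU Qj).
      rewrite /qw /=.
      have h3 : Ble i (upB ht j) by apply: subset_trans h1 (le_up ht j).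
      have E3 : dmap Phi h3 x1 = dmap Phi (le_up ht j) (dmap Phi h1 x1)
        by rewrite (dmap_comp_ob h1 (le_up ht j) h3).
      apply: W_trans (W_cons _ Ew') _.
      apply: W_trans (W_catr _ (u := [:: _; _]) (v := [:: stpe E3]) (stpe_tri _ _ _)) _.
      apply: W_sym.
      exact: (W_catr _ (u := [:: _; _]) (v := [:: stpe E3]) (stpe_tri _ _ _)).
    have Hw := walk_W (Ok := fun _ => True) (fun _ _ _ _ _ _ => conj id id) Hg (A1 (existT _ S x) AS) I.
    apply: W_trans (W_sym Hw) _.
    rewrite /qw /=; apply: W_trans (W_cons _ Ew) _.
    exact: (W_catr _ (u := [:: _; _]) (v := [:: stp h x]) (stpe_tri _ _ _)).
- have MT := arr_MM ht h MS HT.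
  have EST : S = T by apply: Bn_inj; rewrite (eqP MS) (eqP MT).
  subst T.
  have -> : existT _ S (dmap Phi h x) = existT _ S x :> gOn by rewrite dmap_id_ob.
  split => //.
  rewrite -[X in W X _]cat0s -[X in W _ X]/([:: stp h x] ++ _); apply: W_catr.
  exact: (W_sym (stpe_id _)).
- have BT := arr_B HU h BS HT.
  have [-> ->] := p'_B (b := existT _ S x) BS.
  have [-> ->] := p'_B (b := existT _ T (dmap Phi h x)) BT.
  split; [exact: B3 | exact: B4].
Qed.

Lemma step_contr : @Contr _ _ Phi QM rep' p'.
Proof.
split; [exact: C1 | exact: C2 | |].
- by move=> i j h x Qi Qj; case: (Carr h x Qi Qj).
- by move=> i j h x Qi Qj; case: (Carr h x Qi Qj).
Qed.

End Step.

Definition HinjP (t : nat) (U : {set 'I_n}) : Prop :=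
  forall (a e : gOn) (qa : Q t U (projT1 a)) (qe : Q t U (projT1 e)) (S : Bn n),
  sval S = Wm t U -> forall (ha : Ble (projT1 a) S) (he : Ble (projT1 e) S),
  dmap Phi ha (projT2 a) = dmap Phi he (projT2 e) ->
  clos_refl_sym_trans _ (@cRel _ _ Phi (Q t U)) (CPt qa (projT2 a)) (CPt qe (projT2 e)).

Lemma contr_all (Hall : forall t (ht : t < n) (U : {set 'I_n}), U \subset [set i : 'I_n | t < i] -> HinjP t U) :
  forall m, m <= n -> forall U : {set 'I_n}, U \subset [set i : 'I_n | m <= i] ->
  exists rep p, @Contr _ _ Phi (Q m U) rep p.
Proof.
elim=> [|m IH] Hm U HU.
  exists id, (fun _ => [::]); split=> [a|a|i j h x|i j h x]; by rewrite Q0.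
have ht : m < n := Hm.
have HU' : U \subset [set i : 'I_n | m <= i].
  apply: subset_trans HU _; apply/subsetP => i; rewrite !inE; exact: ltnW.
have HU'' : Ordinal ht |: U \subset [set i : 'I_n | m <= i].
  by rewrite subUset HU' andbT sub1set inE.
have [rA [pA CA]] := IH (ltnW Hm) U HU'.
have [rB [pB CB]] := IH (ltnW Hm) _ HU''.
eexists; eexists; exact: (step_contr HU CA CB (Hall m ht U HU)).
Qed.

End Cube.



Lemma Hinj_of n (Phi : Diagram (@Ble n)) (V U : {set 'I_n}) (HA : A_cond Phi V U) :
  forall (a e : gO Phi) (qa : BVU V U (projT1 a)) (qe : BVU V U (projT1 e)) (S : Bn n),
  sval S = V -> forall (ha : Ble (projT1 a) S) (he : Ble (projT1 e) S),
  dmap Phi ha (projT2 a) = dmap Phi he (projT2 e) ->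
  clos_refl_sym_trans _ (@cRel _ _ Phi (BVU V U)) (CPt qa (projT2 a)) (CPt qe (projT2 e)).
Proof.
move=> a e qa qe S HS ha he E.
have hV : V != setT by rewrite -HS; exact: (valP S).
have ES : S = exist _ V hV by apply: val_inj.
subst S; apply: qcls_inv; apply: (HA hV).
rewrite !colim_to_obj_cls /canon_pt /=.
by rewrite (proof_irrelevance _ (BVU_le hV qa) ha) (proof_irrelevance _ (BVU_le hV qe) he).
Qed.

Theorem theorem2p1 (n : nat) (Phi : Diagram (@Ble n)) :
  2 <= n ->
  (forall k : nat, 1 <= k <= n - 1 -> A_cond Phi (setk n k) set0) ->
  (forall (k : nat) (U : {set 'I_n}),
      1 <= k <= n - 2 -> U \subset [set i : 'I_n | k < i] ->
      A_cond Phi (setk n k :|: U) U) ->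
  IsEquivalence (delta Phi).
Proof.
move=> _ HA1 HA2.
have Hall : forall t (ht : t < n) (U : {set 'I_n}), U \subset [set i : 'I_n | t < i] -> HinjP Phi t U.
  move=> t ht U HU.
  case: t ht HU => [|t] ht HU.
    by move=> a e qa; exfalso; move: qa; rewrite Q0.
  apply: Hinj_of.
  case: (set_0Vmem U) => [->|[i Hi]].
    rewrite setU0; apply: HA1; lia.
  apply: HA2 => //; have := subsetP HU i Hi; rewrite inE => Hti.
  have := ltn_ord i; lia.
have [rep [p HC]] := contr_all Hall (leqnn n) (sub0set [set i : 'I_n | n <= i]).
have EQ : Q n set0 = @Ptrue (Bn n).
  apply: functional_extensionality => S; rewrite /Q /BVU /Ptrue sub0set setU0 setkn /=.
  by rewrite properT; exact: (valP S).
rewrite EQ in HC.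
exact: (equiv_of_contr (fun S : Bn n => subxx (sval S)) HC).
Qed.
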